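(* Every strategyproof and pairwise social choice correspondence satisfies WMON, WSMON, IUA, and WLOC.
   Context: Let $A$ be a finite set of alternatives; a preference profile $R$ assigns a strict total order $\succ_i$ on $A$ (viewed as a set of ordered pairs) to each voter $i$ of a finite non-empty electorate $N\subseteq\{1,2,\dots\}$; $\mathcal{R}^*(A)$ is the set of all profiles over all electorates. $g_R(x,y)=|\{i: x\succ_i y\}|-|\{i: y\succ_i x\}|$. An SCC is $f:\mathcal{R}^*(A)\to 2^A\setminus\{\emptyset\}$; it is pairwise if $f(R)=f(R')$ whenever $g_R=g_{R'}$. Fishburn's extension: for $X\ne Y$, $X\succ_i^F Y$ iff $x\succ_i y$ for all $x\in X\setminus Y,y\in Y$ and for all $x\in X,y\in Y\setminus X$. $f$ is strategyproof if there are no electorate $N$, voter $i\in N$, and profiles $R,R'$ on $N$ with $\succ_j=\succ'_j$ for $j\ne i$ and $f(R')\succ_i^F f(R)$. For $B\subseteq A$, $\succ_i|_B=\succ_i\cap B^2$. In the following, $R,R'$ are profiles on the same electorate $N$ and $i\in N$ with $\succ_j=\succ'_j$ for all $j\ne i$. WMON: for all $a,b\in A$, if $\succ'_i=\succ_i\setminus\{(b,a)\}\cup\{(a,b)\}$ and $a\in f(R)$, then $a\in f(R')$ or $b\in f(R')\setminus f(R)$. WSMON: if $a\notin f(R)$, $\succ_i|_{A\setminus\{a\}}=\succ'_i|_{A\setminus\{a\}}$, $a\succ_i z$ for all $z\ne a$, and $z\succ'_i a$ for all $z\ne a$, then $f(R)=f(R')$. IUA: if there is $B\subseteq A\setminus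 f(R)$ with $\succ_i\setminus\succ_i|_B=\succ'_i\setminus\succ'_i|_B$, then $f(R)=f(R')$. WLOC: if there is $B\subseteq A$ with $\succ_i\setminus\succ_i|_B=\succ'_i\setminus\succ'_i|_B$ and $B\cap f(R)=B\cap f(R')$, then $f(R)=f(R')$. *)

(* Defs.v *)
From HB Require Import structures.
From mathcomp Require Import all_boot all_order all_algebra.
From mathcomp Require Import finmap.
Set Implicit Arguments. Unset Strict Implicit. Unset Printing Implicit Defensive.



Section Defs.
Variable A : finType.

(* A preference is a set of ordered pairs; (x,y) \in r means x is preferred to y. *)
Definition strict_total_order (r : {set A * A}) : Prop :=
  [/\ forall x, (x, x) \notin r,
      forall x y z, (x, y) \in r -> (y, z) \in r -> (x, z) \in r
    & forall x y, x != y -> ((x, y) \in r) || ((y, x) \in r)].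

Definition profile (N : {fset nat}) (P : {ffun N -> {set A * A}}) : Prop :=
  [/\ N != fset0, (forall i : N, 0 < val i)%N & forall i : N, strict_total_order (P i)].

Definition corr := forall N : {fset nat}, {ffun N -> {set A * A}} -> {set A}.

Definition is_SCC (f : corr) : Prop :=
  forall (N : {fset nat}) (P : {ffun N -> {set A * A}}), profile P -> @f N P != set0.

Definition margin (N : {fset nat}) (P : {ffun N -> {set A * A}}) (x y : A) : int :=
  (#|[set i : N | (x, y) \in P i]|%:Z - #|[set i : N | (y, x) \in P i]|%:Z)%R.

Definition pairwise_scc (f : corr) : Prop :=
  forall (N : {fset nat}) (P : {ffun N -> {set A * A}}) (N' : {fset nat}) (P' : {ffun N' -> {set A * A}}),
    profile P -> profile P' -> (forall x y, margin P x y = margin P' x y) ->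
    f N P = f N' P'.

Definition fishburn (r : {set A * A}) (X Y : {set A}) : Prop :=
  [/\ X != Y,
      (forall x y, x \in X :\: Y -> y \in Y -> (x, y) \in r)
    & (forall x y, x \in X -> y \in Y :\: X -> (x, y) \in r)].

Definition ideviation (N : {fset nat}) (i : N) (P P' : {ffun N -> {set A * A}}) : Prop :=
  profile P /\ profile P' /\ (forall j : N, j != i -> P' j = P j).

Definition strategyproof (f : corr) : Prop :=
  forall (N : {fset nat}) (i : N) (P P' : {ffun N -> {set A * A}}),
    ideviation i P P' -> ~ fishburn (P i) (f N P') (f N P).

Definition restr (r : {set A * A}) (B : {set A}) : {set A * A} := r :&: setX B B.

Definition WMON (f : corr) : Prop :=
  forall (N : {fset nat}) (i : N) (P P' : {ffun N -> {set A * A}}) (a b : A),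
    ideviation i P P' ->
    P' i = (P i :\ (b, a)) :|: [set (a, b)] ->
    a \in f N P ->
    a \in f N P' \/ b \in f N P' :\: f N P.

Definition WSMON (f : corr) : Prop :=
  forall (N : {fset nat}) (i : N) (P P' : {ffun N -> {set A * A}}) (a : A),
    ideviation i P P' ->
    a \notin f N P ->
    restr (P i) (~: [set a]) = restr (P' i) (~: [set a]) ->
    (forall z, z != a -> (a, z) \in P i) ->
    (forall z, z != a -> (z, a) \in P' i) ->
    f N P = f N P'.

Definition IUA (f : corr) : Prop :=
  forall (N : {fset nat}) (i : N) (P P' : {ffun N -> {set A * A}}),
    ideviation i P P' ->
    (exists B : {set A}, B \subset ~: f N P /\
       P i :\: restr (P i) B = P' i :\: restr (P' i) B) ->
    f N P = f N P'.

Definition WLOC (f : corr) : Prop :=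
  forall (N : {fset nat}) (i : N) (P P' : {ffun N -> {set A * A}}),
    ideviation i P P' ->
    (exists B : {set A},
       P i :\: restr (P i) B = P' i :\: restr (P' i) B /\
       B :&: f N P = B :&: f N P') ->
    f N P = f N P'.

End Defs.

(* Main.v *)
Require Import Defs.
From HB Require Import structures.
From mathcomp Require Import all_boot all_order all_algebra.
From mathcomp Require Import finmap.
From mathcomp Require Import zify.
Set Implicit Arguments. Unset Strict Implicit. Unset Printing Implicit Defensive.
Import GRing.Theory.
Local Open Scope fset_scope.

Section Aux.
Variable A : finType.
Implicit Types r : {set A * A}.

Definition rev_rel r : {set A*A} := [set p | (p.2, p.1) \in r].

Lemma sto_rev r : strict_total_order r -> strict_total_order (rev_rel r).
Proof.
case=> H1 H2 H3; split.
- by move=> x; rewrite inE /= H1.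
- by move=> x y z; rewrite !inE /= => h1 h2; apply: H2 h2 h1.
- by move=> x y nxy; rewrite !inE /= orbC; apply: H3.
Qed.

Lemma sto_asym r x y : strict_total_order r -> (x, y) \in r -> (y, x) \notin r.
Proof. by case=> H1 H2 _ h; apply/negP => h'; move: (H2 _ _ _ h h'); rewrite (negbTE (H1 x)). Qed.

Definition ord_lev (lev : A -> nat) r :=
  [set p : A * A | (lev p.1 < lev p.2)%N || ((lev p.1 == lev p.2) && (p \in r))].

Lemma sto_ord lev r : strict_total_order r -> strict_total_order (ord_lev lev r).
Proof.
case=> H1 H2 H3; split.
- by move=> x; rewrite inE /= ltnn eqxx H1.
- move=> x y z; rewrite !inE /=.
  case/orP=> [l1|/andP[/eqP e1 m1]]; case/orP=> [l2|/andP[/eqP e2 m2]].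
  + by rewrite (ltn_trans l1 l2).
  + by rewrite -e2 l1.
  + by rewrite e1 l2.
  + by rewrite e1 e2 eqxx (H2 _ _ _ m1 m2) orbT.
- move=> x y nxy; rewrite !inE /=.
  case: (ltngtP (lev x) (lev y)) => //= e.
  exact: H3.
Qed.

Lemma ord_lt lev r x y : (lev x < lev y)%N -> (x, y) \in ord_lev lev r.
Proof. by move=> h; rewrite inE /= h. Qed.

Definition gz r (x y : A) : int := ((((x,y) \in r) : nat)%:Z - (((y,x) \in r) : nat)%:Z)%R.

Lemma card_sum_bool (T : finType) (c : pred T) : #|[set v | c v]| = (\sum_(v : T) (c v : nat))%N.
Proof. by rewrite -sum1dep_card big_mkcond. Qed.

Lemma marginE (N : {fset nat}) (P : {ffun N -> {set A * A}}) x y :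
  margin P x y = (\sum_(v : N) gz (P v) x y)%R.
Proof.
rewrite /margin /gz sumrB !card_sum_bool.
by rewrite !(big_morph Posz PoszD (erefl _)).
Qed.


Definition ext (N : {fset nat}) (P : {ffun N -> {set A*A}}) (j : nat) r t (n : nat) : {set A*A} :=
  if (insub n : option N) is Some v then P v else if n == j then r else rev_rel t.

Lemma int4 (M a b c d a' b' c' d' : int) : (a' - c' = a - c)%R -> (b' - d' = b - d)%R ->
  (M + (a - b) - (c - d) = M + (a' - b') - (c' - d'))%R.
Proof. lia. Qed.

Lemma gz_rev r x y : gz (rev_rel r) x y = (- gz r x y)%R.
Proof. by rewrite /gz !inE /= opprB. Qed.

Lemma Dint (a b c d : bool) : (a = b /\ c = d) \/ (a = c /\ b = d) ->
  ((a : nat)%:Z - (b : nat)%:Z = (c : nat)%:Z - (d : nat)%:Z)%R.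
Proof. by case: a; case: b; case: c; case: d; case=> -[] //. Qed.

Lemma profile_ext (N : {fset nat}) (P : {ffun N -> {set A*A}}) j k s t :
  profile P -> strict_total_order s -> strict_total_order t -> (0 < j)%N -> (0 < k)%N ->
  profile [ffun v : (N `|` [fset j; k]) => ext P j s t (val v)].
Proof.
case=> _ hpos hsto hs ht hj hk; split.
- apply/eqP => h.
  have : j \in N `|` [fset j; k] by rewrite in_fsetU in_fset2 eqxx orbT.
  by rewrite h.
- move=> v; have := fsvalP v; rewrite in_fsetU in_fset2.
  move=> hv; change (0 < fsval v)%N; move: hv; case/or3P => [vN|/eqP->|/eqP->] //.
  exact: (hpos [` vN]).
- move=> v; rewrite ffunE /ext; case: insubP => [u _ _ | _]; first exact: hsto.
  case: eqP => _ //; exact: sto_rev.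
Qed.

Lemma sum_ext (N : {fset nat}) (P : {ffun N -> {set A*A}}) j k s t x y :
  j \notin N -> k \notin N -> j != k ->
  (\sum_(v : (N `|` [fset j; k])) gz (ext P j s t (val v)) x y)%R =
  (margin P x y + gz s x y + gz (rev_rel t) x y)%R.
Proof.
move=> jN kN jk.
rewrite -(big_seq_fsetE _ (N `|` [fset j; k]) xpredT (fun n => gz (ext P j s t n) x y)).
have pe : perm_eq (N `|` [fset j; k]) (N ++ [:: j; k]).
  apply: uniq_perm; first exact: fset_uniq.
    by rewrite cat_uniq fset_uniq /= !inE (negbTE jN) (negbTE kN) jk.
  by move=> z; rewrite in_fsetU in_fset2 mem_cat !inE.
rewrite (perm_big _ pe) big_cat /= !big_cons big_nil addr0 addrA.
congr (_ + _ + _)%R.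
- rewrite marginE (big_seq_fsetE _ N xpredT (fun n => gz (ext P j s t n) x y)) /=; apply: eq_bigr => v _.
  by rewrite /ext valK.
- by rewrite /ext insubN // eqxx.
- by rewrite /ext insubN // ifN // eq_sym.
Qed.


Lemma margin_dev (N : {fset nat}) (i : N) (P P' : {ffun N -> {set A*A}}) x y :
  (forall j : N, j != i -> P' j = P j) ->
  margin P' x y = (margin P x y + gz (P' i) x y - gz (P i) x y)%R.
Proof.
move=> dev; rewrite !marginE (bigD1 i) //= [in RHS](bigD1 i) //=.
rewrite (eq_bigr (fun v => gz (P v) x y)); last by move=> v /dev ->.
by move: (gz (P i) x y) (gz (P' i) x y) (\sum_(i0 | i0 != i) gz (P i0) x y)%R => a b c; lia.
Qed.

Lemma core (f : corr A) (N : {fset nat}) (i : N) (P P' : {ffun N -> {set A*A}}) r r' :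
  pairwise_scc f -> strategyproof f -> ideviation i P P' ->
  strict_total_order r -> strict_total_order r' ->
  (forall p, ((p \in r') = (p \in r) /\ (p \in P' i) = (p \in P i)) \/
             ((p \in r') = (p \in P' i) /\ (p \in r) = (p \in P i))) ->
  ~ fishburn r (f N P') (f N P).
Proof.
move=> hpw hsp [hP [hP' dev]] hr hr' D.
pose j := (\max_(n <- N) n).+1; pose k := j.+1.
have jN : j \notin N.
  apply/negP => h; have := @leq_bigmax_seq _ _ xpredT (fun n => n) j h isT.
  by rewrite /j ltnn.
have kN : k \notin N.
  apply/negP => h; have := @leq_bigmax_seq _ _ xpredT (fun n => n) k h isT.
  by move/ltnW; rewrite ltnn.
have jk : j != k by rewrite /k neq_ltn ltnSn.
have jN' : j \in N `|` [fset j; k] by rewrite in_fsetU in_fset2 eqxx orbT.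
pose jj : N `|` [fset j; k] := [` jN'].
pose Q := [ffun v : (N `|` [fset j; k]) => ext P j r r (val v)].
pose Q' := [ffun v : (N `|` [fset j; k]) => ext P j r' r (val v)].
have hQ : profile Q by apply: profile_ext.
have hQ' : profile Q' by apply: profile_ext.
have mQ : forall x y, margin P x y = margin Q x y.
  move=> x y; rewrite [margin Q _ _]marginE.
  rewrite (eq_bigr (fun v => gz (ext P j r r (val v)) x y)); last by move=> v _; rewrite ffunE.
  by rewrite sum_ext // gz_rev addrK.
have mQ' : forall x y, margin P' x y = margin Q' x y.
  move=> x y; rewrite [margin Q' _ _]marginE.
  rewrite (eq_bigr (fun v => gz (ext P j r' r (val v)) x y)); last by move=> v _; rewrite ffunE.
  rewrite sum_ext // gz_rev (margin_dev x y dev).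
  have h1 := Dint (D (x, y)); have h2 := Dint (D (y, x)).
  rewrite /gz; exact: int4.
have e1 := hpw _ _ _ _ hP hQ mQ.
have e2 := hpw _ _ _ _ hP' hQ' mQ'.
have hdev : ideviation jj Q Q'.
  split; first exact: hQ; split; first exact: hQ'.
  move=> v nv; rewrite !ffunE /ext; case: insubP => [u _ _ //| _].
  case: eqP => // ev; case/eqP: nv; exact: val_inj.
have := hsp _ jj Q Q' hdev.
by rewrite e1 e2 ffunE /ext /= insubN // eqxx.
Qed.


Lemma D_lev (s s' : {set A * A}) lev :
  (forall p, (p \in s') != (p \in s) -> lev p.1 = lev p.2) ->
  forall p, ((p \in ord_lev lev s') = (p \in ord_lev lev s) /\ (p \in s') = (p \in s)) \/
            ((p \in ord_lev lev s') = (p \in s') /\ (p \in ord_lev lev s) = (p \in s)).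
Proof.
move=> h [x y]; rewrite !inE /=.
case: (eqVneq (lev x) (lev y)) => e.
  by right; rewrite e ltnn.
case: (eqVneq ((x,y) \in s') ((x,y) \in s)) => [E|E].
  by left; rewrite E.
by move: (h _ E) => /= /eqP; rewrite (negbTE e).
Qed.

Lemma idev_sym (N : {fset nat}) (i : N) (P P' : {ffun N -> {set A*A}}) :
  ideviation i P P' -> ideviation i P' P.
Proof. by case=> h1 [h2 h3]; split; [|split] => // j /h3 ->. Qed.

Lemma prof_sto (N : {fset nat}) (P : {ffun N -> {set A*A}}) (i : N) :
  profile P -> strict_total_order (P i).
Proof. by case. Qed.

End Aux.

Ltac contra_mem :=
  match goal with
  | H1 : is_true ?p, H2 : is_true (~~ ?p) |- _ => by rewrite H1 in H2
  | H : is_true (~~ (?u == ?u)) |- _ => by rewrite eqxx in H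
  end.

Ltac lv :=
  repeat (rewrite ?eqxx /=;
    match goal with
    | |- context [if ?z == ?w then _ else _] =>
        case: (eqVneq z w) => [?|?]; [subst z|]
    | |- context [if ?c then _ else _] => case: (boolP c) => ?
    end);
  try done; try contra_mem.

Lemma wmon (A : finType) (f : corr A) : pairwise_scc f -> strategyproof f -> WMON f.
Proof.
move=> hpw hsp N i P P' a b hdev hP'i haX.
have [hP [hP' dev]] := hdev.
have sP := prof_sto i hP; have sP' := prof_sto i hP'.
have ab : a != b.
  apply/eqP => eab; subst b; case: sP' => irr _ _; move: (irr a).
  by rewrite hP'i !inE eqxx orbT.
have ab' : (a == b) = false by apply/negbTE.
have ba' : (b == a) = false by rewrite eq_sym.
case: (boolP ((b, a) \in P i)) => hba; last first.
  have hab : (a, b) \in P i.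
    by case: sP => _ _ /(_ a b ab)/orP[] //; rewrite (negbTE hba).
  have eP : P' = P.
    apply/ffunP => v; case: (eqVneq v i) => [->|nv]; last exact: dev.
    rewrite hP'i; apply/setP => p; rewrite !inE.
    case: (eqVneq p (a, b)) => [->|n1]; first by rewrite hab orbT.
    case: (eqVneq p (b, a)) => [->|n2] /=; first by rewrite (negbTE hba).
    by rewrite orbF.
  by left; rewrite eP.
have levc : forall lev : A -> nat, lev a = lev b ->
    forall p, (p \in P' i) != (p \in P i) -> lev p.1 = lev p.2.
  move=> lev e [x y]; rewrite hP'i !inE /=.
  case: (eqVneq (x, y) (a, b)) => [[-> ->]|n1] //.
  case: (eqVneq (x, y) (b, a)) => [[-> ->]|n2] //.
  by rewrite /= orbF eqxx.
case: (boolP (a \in f N P')) => haY; first by left.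
right.
case: (boolP (b \in f N P')) => hbY.
  case: (boolP (b \in f N P)) => hbX; last by rewrite in_setD hbX hbY.
  exfalso.
  pose lev z := if z == b then 3 else if z == a then 3 else
     if z \in f N P' then (if z \in f N P then 2 else 1) else (if z \in f N P then 4 else 5).
  apply: (core hpw hsp hdev (sto_ord lev sP) (sto_ord lev sP') (D_lev (levc lev _))).
    by rewrite /lev ab' !eqxx.
  split.
  - by apply/eqP => e; move: haY; rewrite e haX.
  - move=> x y /setDP [xY xnX] yX; rewrite inE /= /lev; lv.
  - move=> x y xY /setDP [yX ynY]; rewrite inE /= /lev; lv.
have hab : (a, b) \in P' i by rewrite hP'i !inE eqxx orbT.
exfalso.
pose lev z := if z == a then 0 else if z == b then 0 else
   if z \in f N P then (if z \in f N P' then 2 else 1) else (if z \in f N P' then 3 else 4).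
apply: (core hpw hsp (idev_sym hdev) (sto_ord lev sP') (sto_ord lev sP)).
  apply: D_lev => p hp; apply: levc; first by rewrite /lev ab' ba' !eqxx.
  by rewrite eq_sym.
split.
- by apply/eqP => e; move: haY; rewrite -e haX.
- move=> x y /setDP [xX xnY] yY; rewrite inE /= /lev; lv.
- move=> x y xX /setDP [yY ynX]; rewrite inE /= /lev; lv.
Qed.

Lemma iua (A : finType) (f : corr A) : pairwise_scc f -> strategyproof f -> IUA f.
Proof.
move=> hpw hsp N i P P' hdev [B [hB hE]].
have [hP [hP' dev]] := hdev.
have sP := prof_sto i hP; have sP' := prof_sto i hP'.
case: (eqVneq (f N P) (f N P')) => // ne; exfalso.
have nB : forall z, z \in f N P -> z \notin B.
  by move=> z zX; apply/negP => /(subsetP hB); rewrite inE zX.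
pose lev z := if z \in B then 1 else
   if z \in f N P' then (if z \in f N P then 2 else 1) else (if z \in f N P then 3 else 4).
have levc : forall p, (p \in P' i) != (p \in P i) -> lev p.1 = lev p.2.
  move=> [x y] /=; have := congr1 (fun S : {set A * A} => (x, y) \in S) hE; rewrite /= !inE /=.
  rewrite /lev; case: (x \in B) (y \in B) => [] [] //=; rewrite ?andbF ?andbT /= => ->; by rewrite eqxx.
apply: (core hpw hsp hdev (sto_ord lev sP) (sto_ord lev sP') (D_lev levc)).
split.
- by rewrite eq_sym.
- move=> x y /setDP [xY xnX] yX; have yB := nB _ yX; rewrite inE /= /lev; lv.
- move=> x y xY /setDP [yX ynY]; have yB := nB _ yX; rewrite inE /= /lev; lv.
Qed.

Lemma wloc (A : finType) (f : corr A) : pairwise_scc f -> strategyproof f -> WLOC f.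
Proof.
move=> hpw hsp N i P P' hdev [B [hE hBX]].
have [hP [hP' dev]] := hdev.
have sP := prof_sto i hP; have sP' := prof_sto i hP'.
case: (eqVneq (f N P) (f N P')) => // ne; exfalso.
have mB : forall z, z \in B -> (z \in f N P) = (z \in f N P').
  move=> z zB; have := congr1 (fun S : {set A} => z \in S) hBX; by rewrite /= !inE zB.
pose lev z := if z \in B then 2 else
   if z \in f N P' then (if z \in f N P then 2 else 1) else (if z \in f N P then 3 else 4).
have levc : forall p, (p \in P' i) != (p \in P i) -> lev p.1 = lev p.2.
  move=> [x y] /=; have := congr1 (fun S : {set A * A} => (x, y) \in S) hE; rewrite /= !inE /=.
  rewrite /lev; case: (x \in B) (y \in B) => [] [] //=; rewrite ?andbF ?andbT /= => ->; by rewrite eqxx.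
apply: (core hpw hsp hdev (sto_ord lev sP) (sto_ord lev sP') (D_lev levc)).
split.
- by rewrite eq_sym.
- move=> x y /setDP [xY xnX] yX.
  have xB : x \notin B by apply/negP => /mB; rewrite xY (negbTE xnX).
  rewrite inE /= /lev; lv.
- move=> x y xY /setDP [yX ynY].
  have yB : y \notin B by apply/negP => /mB; rewrite yX (negbTE ynY).
  rewrite inE /= /lev; lv.
Qed.

Lemma wsmon (A : finType) (f : corr A) : pairwise_scc f -> strategyproof f -> WSMON f.
Proof.
move=> hpw hsp N i P P' a hdev haX hR htop hbot.
have [hP [hP' dev]] := hdev.
have sP := prof_sto i hP; have sP' := prof_sto i hP'.
case: (eqVneq (f N P) (f N P')) => // ne; exfalso.
pose lev z := if z == a then 0 else
   if z \in f N P' then (if z \in f N P then 2 else 1) else (if z \in f N P then 3 else 4).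
pose lev' z := if z == a then 6 else lev z.
have la : lev a = 0 by rewrite /lev eqxx.
have lpos : forall z, z != a -> (0 < lev z < 6)%N.
  by move=> z za; rewrite /lev (negbTE za); do 2 case: ifP.
have irr : forall (s : {set A * A}), strict_total_order s -> forall z, ((z, z) \in s) = false.
  by move=> s [h _ _] z; apply/negbTE.
have D : forall p, ((p \in ord_lev lev' (P' i)) = (p \in ord_lev lev (P i)) /\ (p \in P' i) = (p \in P i)) \/
            ((p \in ord_lev lev' (P' i)) = (p \in P' i) /\ (p \in ord_lev lev (P i)) = (p \in P i)).
  move=> [x y]; rewrite !inE /=.
  case: (eqVneq x a) => [->|xa]; case: (eqVneq y a) => [->|ya].
  - by right; rewrite !ltnn !eqxx !irr.
  - have /andP[l1 l2] := lpos y ya.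
    have h1 := htop y ya; have h2 := sto_asym sP' (hbot y ya).
    right; rewrite /lev' eqxx (negbTE ya) h1 (negbTE h2).
    by rewrite la l1 andbF orbF ltnNge (ltnW l2).
  - have /andP[l1 l2] := lpos x xa.
    have h1 := hbot x xa; have h2 := sto_asym sP (htop x xa).
    right; rewrite /lev' eqxx (negbTE xa) h1 (negbTE h2).
    by rewrite la l2 ltn0 andbF.
  - have e : ((x, y) \in P' i) = ((x, y) \in P i).
      have := congr1 (fun S : {set A * A} => (x, y) \in S) hR.
      by rewrite /restr /= !inE xa ya !andbT => ->.
    by left; rewrite /lev' (negbTE xa) (negbTE ya) e.
apply: (core hpw hsp hdev (sto_ord lev sP) (sto_ord lev' sP') D).
split.
- by rewrite eq_sym.
- move=> x y /setDP [xY xnX] yX; rewrite inE /= /lev; lv.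
- move=> x y xY /setDP [yX ynY]; rewrite inE /= /lev; lv.
Qed.

Theorem lemma4 (A : finType) (f : corr A) :
  is_SCC f -> pairwise_scc f -> strategyproof f ->
  WMON f /\ WSMON f /\ IUA f /\ WLOC f.
Proof.
move=> _ hpw hsp; split; [exact: wmon | split; [exact: wsmon | split; [exact: iua | exact: wloc]]].
Qed.
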